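(* Let $H$ be a Kekul\'ean hexagonal system and $n\ge0$. The map $f$ from the set of Clar covers of $H$ with exactly $n$ hexagons to the set of induced subgraphs of $R(H)$ isomorphic to $Q_n$ is surjective: for every induced subgraph $G_n$ of $R(H)$ isomorphic to $Q_n$ there is a Clar cover $C$ of $H$ with exactly $n$ hexagons such that $f(C)=G_n$.
   Context: A hexagonal system is a 2-connected finite plane graph in which every interior face is a regular hexagon of side length one; its hexagons are the boundaries of its interior faces; it is Kekul\'ean if it has a perfect matching. A Clar cover of $H$ is a spanning subgraph each of whose components is a hexagon of $H$ or a single edge. The resonance graph $R(H)$ has the perfect matchings of $H$ as vertices, two adjacent iff their symmetric difference is the edge set of a hexagon of $H$. For a Clar cover $C$, $f(C)$ denotes the subgraph of $R(H)$ induced by all perfect matchings $M$ of $H$ such that every hexagon component of $C$ is $M$-alternating and every single-edge component of $C$ belongs to $M$. *)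

(* Defs.v *)
From HB Require Import structures.
From mathcomp Require Import all_boot all_order all_algebra.
From mathcomp Require Import finmap.
Set Implicit Arguments. Unset Strict Implicit. Unset Printing Implicit Defensive.
Import Order.TTheory GRing.Theory Num.Theory.
Local Open Scope fset_scope.

(* Hexagonal cells of the honeycomb lattice, in axial coordinates: the cell
   (a,b) is adjacent (shares an edge) with (a+-1,b), (a,b+-1), (a+1,b-1),
   (a-1,b+1). *)
Definition cell := (int * int)%type.

Definition cell_adj (c d : cell) : bool :=
  let: (a, b) := c in
  d \in [:: ((a + 1)%R, b); ((a - 1)%R, b); (a, (b + 1)%R); (a, (b - 1)%R);
            ((a + 1)%R, (b - 1)%R); ((a - 1)%R, (b + 1)%R)].

(* Vertices of the honeycomb lattice = triangles of three mutually adjacent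
   cells: (a,b,false) is the triangle {(a,b),(a+1,b),(a,b+1)} and
   (a,b,true) is the triangle {(a+1,b),(a,b+1),(a+1,b+1)}. *)
Definition vert := (int * int * bool)%type.
(* An edge is the 2-element set of its end vertices. *)
Definition edge := {fset vert}.

(* The six vertices of cell (a,b), in cyclic order around the hexagon. *)
Definition hexcyc (c : cell) : seq vert :=
  let: (a, b) := c in
  [:: (a, b, false); ((a - 1)%R, b, true); ((a - 1)%R, b, false);
      ((a - 1)%R, (b - 1)%R, true); (a, (b - 1)%R, false); (a, (b - 1)%R, true)].

Definition vdef : vert := (Posz 0, Posz 0, false).

Definition hexV (c : cell) : {fset vert} := [fset x in hexcyc c].

Definition hexedge (c : cell) (i : nat) : edge :=
  [fset nth vdef (hexcyc c) i; nth vdef (hexcyc c) (i.+1 %% 6)].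

Definition hexE (c : cell) : {fset edge} :=
  [fset hexedge c 0; hexedge c 1; hexedge c 2; hexedge c 3; hexedge c 4; hexedge c 5].

Definition HV (S : {fset cell}) : {fset vert} := \bigcup_(c <- S) hexV c.
Definition HE (S : {fset cell}) : {fset edge} := \bigcup_(c <- S) hexE c.

Definition gconnected (W : {fset vert}) (E : {fset edge}) : Prop :=
  forall u v, u \in W -> v \in W ->
    exists p : seq vert,
      [/\ path (fun x y => [fset x; y] \in E) u p, last u p = v
        & all (fun x => x \in W) p].

Definition two_connected (W : {fset vert}) (E : {fset edge}) : Prop :=
  [/\ 3 <= #|` W|, gconnected W E & forall x, x \in W -> gconnected (W `\ x) E].

(* Every bounded face of the plane graph (HV S, HE S) is a cell of S:
   every cell not in S lies in the unbounded face, i.e. can be joined through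
   cells not in S (crossing edges not in HE S) to the half plane to the right
   of all cells of S. *)
Definition holefree (S : {fset cell}) : Prop :=
  forall c : cell, c \notin S ->
    exists p : seq cell,
      [/\ path cell_adj c p, all (fun d => d \notin S) p
        & forall s, s \in S -> (s.1 < (last c p).1)%R].

Definition hexagonal_system (S : {fset cell}) : Prop :=
  two_connected (HV S) (HE S) /\ holefree S.

Definition perfect_matching (S : {fset cell}) (M : {fset edge}) : Prop :=
  M `<=` HE S /\
  forall v, v \in HV S -> #|` [fset e in M | v \in e] | = 1.

Definition kekulean (S : {fset cell}) : Prop :=
  exists M, perfect_matching S M.

Definition alternating (c : cell) (M : {fset edge}) : bool :=
  [&& hexedge c 0 \in M, hexedge c 1 \notin M, hexedge c 2 \in M,
      hexedge c 3 \notin M, hexedge c 4 \in M & hexedge c 5 \notin M] ||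
  [&& hexedge c 0 \notin M, hexedge c 1 \in M, hexedge c 2 \notin M,
      hexedge c 3 \in M, hexedge c 4 \notin M & hexedge c 5 \in M].

Definition res_adj (S : {fset cell}) (M1 M2 : {fset edge}) : Prop :=
  exists2 h, h \in S & (M1 `\` M2) `|` (M2 `\` M1) = hexE h.

(* A Clar cover, given by its hexagon components Hs and single-edge
   components Es: they are hexagons / edges of H and every vertex of H lies
   in exactly one component. *)
Definition clar_cover (S : {fset cell}) (Hs : {fset cell}) (Es : {fset edge}) : Prop :=
  [/\ Hs `<=` S, Es `<=` HE S &
      forall v, v \in HV S ->
        (#|` [fset h in Hs | v \in hexV h] | + #|` [fset e in Es | v \in e] |)%N = 1].

Definition in_fC (S : {fset cell}) (Hs : {fset cell}) (Es : {fset edge})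
  (M : {fset edge}) : Prop :=
  [/\ perfect_matching S M, forall h, h \in Hs -> alternating h M & Es `<=` M].

Definition hq_adj (n : nat) (x y : {ffun 'I_n -> bool}) : bool :=
  #|[set i | x i != y i]| == 1.

Definition induced_Qn (S : {fset cell}) (n : nat) (W : {fset {fset edge}}) : Prop :=
  (forall M, M \in W -> perfect_matching S M) /\
  exists phi : {ffun 'I_n -> bool} -> {fset edge},
    [/\ injective phi,
        (forall M, M \in W <-> exists x, phi x = M)
      & forall x y, res_adj S (phi x) (phi y) <-> hq_adj x y].

(* Main.v *)
Require Import Defs.
From mathcomp Require Import all_boot all_order all_algebra finmap.
From mathcomp Require Import zify.
Import GRing.Theory.
Set Implicit Arguments. Unset Strict Implicit.
Local Open Scope fset_scope.

Lemma uniq_hexcyc c : uniq (hexcyc c).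
Proof.
case: c => a b /=. rewrite !inE !xpair_eqE /= !andbF !andbT /=. lia.
Qed.

Definition vtx c k := nth vdef (hexcyc c) k.

Lemma size_hexcyc c : size (hexcyc c) = 6.
Proof. by case: c. Qed.

Lemma vtx_inj c i j : i < 6 -> j < 6 -> (vtx c i == vtx c j) = (i == j).
Proof. by move=> Hi Hj; rewrite /vtx nth_uniq ?size_hexcyc // uniq_hexcyc. Qed.

Lemma hexV_mem c v : (v \in hexV c) = (v \in hexcyc c).
Proof. by rewrite /hexV inE. Qed.

Lemma hexV_vtx c v : (v \in hexV c) = has (fun k => v == vtx c k) (iota 0 6).
Proof.
rewrite hexV_mem.
apply/idP/hasP => [vin|[k]].
  exists (index v (hexcyc c)); first by rewrite mem_iota /= -(size_hexcyc c) index_mem.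
  by rewrite /vtx nth_index.
by rewrite mem_iota /= => Hk /eqP ->; rewrite /vtx mem_nth ?size_hexcyc.
Qed.

Lemma hexV_vtxP c v : v \in hexV c -> exists2 k, k < 6 & v = vtx c k.
Proof. by rewrite hexV_vtx => /hasP [k]; rewrite mem_iota => /= ? /eqP ->; exists k. Qed.

Lemma vtx_hexV c k : k < 6 -> vtx c k \in hexV c.
Proof. by move=> Hk; rewrite hexV_vtx; apply/hasP; exists k; rewrite ?mem_iota. Qed.

Lemma hexedgeE c k : hexedge c k = [fset vtx c k; vtx c (k.+1 %% 6)].
Proof. by []. Qed.

Lemma in_fset6 (T : choiceType) (a0 a1 a2 a3 a4 a5 e : T) :
  (e \in [fset a0; a1; a2; a3; a4; a5]) =
  [|| e == a0, e == a1, e == a2, e == a3, e == a4 | e == a5].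
Proof. by rewrite !in_fsetU !in_fset1 -!orbA. Qed.

Lemma hexE_P c e : e \in hexE c -> exists2 k, k < 6 & e = hexedge c k.
Proof.
rewrite /hexE in_fset6.
case/or4P => [/eqP->|/eqP->|/eqP->|/or3P[/eqP->|/eqP->|/eqP->]].
- by exists 0.
- by exists 1.
- by exists 2.
- by exists 3.
- by exists 4.
- by exists 5.
Qed.

Lemma hexedge_in c k : k < 6 -> hexedge c k \in hexE c.
Proof.
rewrite /hexE; move: (hexedge c) => f.
rewrite in_fset6.
case: k => [|[|[|[|[|[|k]]]]]] Hk; last by [].
all: by rewrite eqxx ?orbT.
Qed.
Lemma hexE_sub c e v : e \in hexE c -> v \in e -> v \in hexV c.
Proof.
move=> /hexE_P [k Hk ->]; rewrite hexedgeE in_fset2 => /orP[]/eqP->;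
apply: vtx_hexV => //; by rewrite ltn_mod.
Qed.

Lemma hexedge_neq c k : k < 6 -> hexedge c k != hexedge c (k.+1 %% 6).
Proof.
move=> Hk; apply/negP => /eqP E.
have : vtx c k \in hexedge c (k.+1 %% 6) by rewrite -E hexedgeE in_fset2 eqxx.
rewrite hexedgeE in_fset2 !vtx_inj ?ltn_mod //; clear E.
by do 6?case: k Hk => [|k] Hk //.
Qed.

Lemma hexE_pair c e : e \in hexE c ->
  exists p q, [/\ p != q, e = [fset p; q], p \in hexV c & q \in hexV c].
Proof.
move=> /hexE_P [k Hk ->]; exists (vtx c k), (vtx c (k.+1 %% 6)).
rewrite vtx_inj ?ltn_mod // !vtx_hexV ?ltn_mod //; split => //.
by do 6?case: k Hk => [|k] Hk //.
Qed.

(* vertex k.+1 lies on edges k and k.+1 *)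
Lemma vtx_edges c v : v \in hexV c -> exists2 k, k < 6 &
   v \in hexedge c k /\ v \in hexedge c (k.+1 %% 6).
Proof.
move=> /hexV_vtxP [j Hj ->]; exists ((j + 5) %% 6); first by rewrite ltn_mod.
rewrite !hexedgeE !in_fset2 !vtx_inj ?ltn_mod //.
by do 6?case: j Hj => [|j] Hj //.
Qed.


Definition in_tri (c : cell) (v : vert) : bool :=
  let: (x, y, b) := v in
  if b then c \in [:: ((x+1)%R,y); (x,(y+1)%R); ((x+1)%R,(y+1)%R)]
  else c \in [:: (x,y); ((x+1)%R,y); (x,(y+1)%R)].

Lemma hexV_tri c v : v \in hexV c -> in_tri c v.
Proof.
rewrite hexV_mem; case: c => a b; rewrite /= !inE.
case: v => [[x y] t] /=.
rewrite !xpair_eqE; case: t => /=; rewrite !inE !xpair_eqE /=; lia.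
Qed.

Lemma tri_key c d u v : c != d -> in_tri c u -> in_tri d u -> in_tri c v ->
  in_tri d v -> u.2 = v.2 -> u = v.
Proof.
case: c => c1 c2; case: d => d1 d2.
case: u => [[x y] t]; case: v => [[x' y'] t'] /= cd.
move=> ++++ tt; subst t'.
case: t; rewrite !inE !xpair_eqE => H1 H2 H3 H4; apply/eqP; rewrite !xpair_eqE eqxx andbT;
move: cd; rewrite xpair_eqE; lia.
Qed.

Lemma tri3 c d u v w : c != d -> in_tri c u -> in_tri d u -> in_tri c v -> in_tri d v ->
  in_tri c w -> in_tri d w -> u != v -> u != w -> v != w -> False.
Proof.
move=> cd cu du cv dv cw dw uv uw vw.
have : [|| u.2 == v.2, u.2 == w.2 | v.2 == w.2].
  by case: (u.2); case: (v.2); case: (w.2).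
case/or3P => /eqP E.
- by move: uv; rewrite (tri_key cd cu du cv dv E) eqxx.
- by move: uw; rewrite (tri_key cd cu du cw dw E) eqxx.
- by move: vw; rewrite (tri_key cd cv dv cw dw E) eqxx.
Qed.

Lemma share2 a b e1 e2 : e1 != e2 -> e1 \in hexE a -> e2 \in hexE a ->
  e1 \in hexE b -> e2 \in hexE b -> a = b.
Proof.
move=> ne h1a h2a h1b h2b; apply/eqP/negPn/negP => ab.
have inab x e : e \in hexE a -> e \in hexE b -> x \in e -> in_tri a x && in_tri b x.
  by move=> ea eb xe; rewrite (hexV_tri (hexE_sub ea xe)) (hexV_tri (hexE_sub eb xe)).
have T3 u v w : u != v -> u != w -> v != w -> in_tri a u && in_tri b u ->
    in_tri a v && in_tri b v -> in_tri a w && in_tri b w -> False.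
  by move=> uv uw vw /andP[? ?] /andP[? ?] /andP[? ?]; apply: (tri3 ab) uv uw vw.
case: (hexE_pair h1a) => p [q [pq E1 _ _]].
case: (hexE_pair h2a) => r [s [rs E2 _ _]].
have Hp : in_tri a p && in_tri b p by apply: inab h1a h1b _; rewrite E1 in_fset2 eqxx.
have Hq : in_tri a q && in_tri b q by apply: inab h1a h1b _; rewrite E1 in_fset2 eqxx orbT.
have Hr : in_tri a r && in_tri b r by apply: inab h2a h2b _; rewrite E2 in_fset2 eqxx.
have Hs : in_tri a s && in_tri b s by apply: inab h2a h2b _; rewrite E2 in_fset2 eqxx orbT.
case: (boolP (r \in [fset p; q])) => [rpq|]; last first.
  rewrite in_fset2 negb_or => /andP[rp rq].
  by apply: (T3 p q r) => //; rewrite eq_sym.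
case: (boolP (s \in [fset p; q])) => [spq|]; last first.
  rewrite in_fset2 negb_or => /andP[sp sq].
  by apply: (T3 p q s) => //; rewrite eq_sym.
move/eqP: ne; apply; rewrite E1 E2; apply/fsetP => x; rewrite !in_fset2.
move: rpq spq rs; rewrite !in_fset2.
by case/orP => /eqP ->; case/orP => /eqP ->; rewrite ?eqxx // => _; rewrite orbC.
Qed.


Lemma in_sep (T : choiceType) (A : {fset T}) (P : pred T) x :
  (x \in [fset y in A | P y]) = (x \in A) && P x.
Proof. by rewrite !inE. Qed.

Definition one_at (M : {fset edge}) v := #|` [fset e in M | v \in e]| = 1.

Lemma one_atP M v : one_at M v ->
  exists e, [/\ e \in M, v \in e & forall e', e' \in M -> v \in e' -> e' = e].
Proof.
move/eqP/cardfs1P => [e E]; exists e.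
have : e \in [fset e in M | v \in e] by rewrite E in_fset1 eqxx.
rewrite in_sep => /andP[eM ve]; split => // e' e'M ve'.
have : e' \in [fset e in M | v \in e] by rewrite in_sep e'M.
by rewrite E in_fset1 => /eqP.
Qed.

Lemma alt_iff c M : alternating c M <->
  (forall k, k < 6 -> (hexedge c k \in M) != (hexedge c (k.+1 %% 6) \in M)).
Proof.
rewrite /alternating; move: (hexedge c) => f; split.
  case/orP => [/andP[a0 /and5P[/negbTE a1 a2 /negbTE a3 a4 /negbTE a5]]|
               /andP[/negbTE a0 /and5P[a1 /negbTE a2 a3 /negbTE a4 a5]]];
  case => [|[|[|[|[|[|k]]]]]] Hk //=; by rewrite ?a0 ?a1 ?a2 ?a3 ?a4 ?a5.
move=> H; move: (H 0 isT) (H 1 isT) (H 2 isT) (H 3 isT) (H 4 isT) => /=.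
case: (f 0 \in M); case: (f 1 \in M); case: (f 2 \in M); case: (f 3 \in M);
case: (f 4 \in M); case: (f 5 \in M) => //.
Qed.

Lemma alt_edge c M v e : alternating c M -> v \in hexV c -> one_at M v ->
  e \in M -> v \in e -> e \in hexE c.
Proof.
move=> /alt_iff A vc /one_atP [m [mM vm U]] eM ve.
case: (vtx_edges vc) => k Hk [v1 v2].
rewrite (U e eM ve).
have [Mk|Mk] := boolP (hexedge c k \in M).
  by rewrite -(U _ Mk v1); apply: hexedge_in.
have Mk1 : hexedge c (k.+1 %% 6) \in M.
  by move: (A k Hk); rewrite (negbTE Mk); case: (_ \in M).
by rewrite -(U _ Mk1 v2); apply: hexedge_in; rewrite ltn_mod.
Qed.

Lemma res_alt c M1 M2 : (forall v, v \in hexV c -> one_at M1 v /\ one_at M2 v) ->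
  (forall e, (e \in hexE c) = ((e \in M1) != (e \in M2))) -> alternating c M1.
Proof.
move=> O D; apply/alt_iff => k Hk.
set v := vtx c (k.+1 %% 6).
have vc : v \in hexV c by apply: vtx_hexV; rewrite ltn_mod.
have v1 : v \in hexedge c k by rewrite hexedgeE in_fset2 eqxx orbT.
have v2 : v \in hexedge c (k.+1 %% 6) by rewrite hexedgeE in_fset2 eqxx.
have ne := hexedge_neq c Hk.
have d1 := D (hexedge c k); rewrite hexedge_in // in d1.
have d2 := D (hexedge c (k.+1 %% 6)); rewrite hexedge_in ?ltn_mod // in d2.
case: (O v vc) => /one_atP [m1 [_ _ U1]] /one_atP [m2 [_ _ U2]].
have nb1 : ~~ ((hexedge c k \in M1) && (hexedge c (k.+1 %% 6) \in M1)).
  by apply/negP => /andP [a b]; move/eqP: ne; apply; rewrite (U1 _ a v1) (U1 _ b v2).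
have nb2 : ~~ ((hexedge c k \in M2) && (hexedge c (k.+1 %% 6) \in M2)).
  by apply/negP => /andP [a b]; move/eqP: ne; apply; rewrite (U2 _ a v1) (U2 _ b v2).
move: d1 d2 nb1 nb2.
case: (hexedge c k \in M1); case: (hexedge c (k.+1 %% 6) \in M1);
case: (hexedge c k \in M2); case: (hexedge c (k.+1 %% 6) \in M2) => //.
Qed.

Lemma alt_same c M M0 : alternating c M -> alternating c M0 -> forall k, k < 6 ->
  (hexedge c k \in M) = (hexedge c k \in M0) (+) ((hexedge c 0 \in M) != (hexedge c 0 \in M0)).
Proof.
rewrite /alternating; move: (hexedge c) => f.
case/orP => [/andP[a0 /and5P[/negbTE a1 a2 /negbTE a3 a4 /negbTE a5]]|
             /andP[/negbTE a0 /and5P[a1 /negbTE a2 a3 /negbTE a4 a5]]];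
case/orP => [/andP[b0 /and5P[/negbTE b1 b2 /negbTE b3 b4 /negbTE b5]]|
             /andP[/negbTE b0 /and5P[b1 /negbTE b2 b3 /negbTE b4 b5]]];
case => [|[|[|[|[|[|k]]]]]] Hk //=;
by rewrite ?a0 ?a1 ?a2 ?a3 ?a4 ?a5 ?b0 ?b1 ?b2 ?b3 ?b4 ?b5.
Qed.

Lemma alt_xor c M M0 t : alternating c M0 ->
  (forall k, k < 6 -> (hexedge c k \in M) = (hexedge c k \in M0) (+) t) ->
  alternating c M.
Proof.
rewrite /alternating; move: (hexedge c) => f A H.
rewrite !H //; clear H; move: A.
by case: (f 0 \in M0); case: (f 1 \in M0); case: (f 2 \in M0); case: (f 3 \in M0);
case: (f 4 \in M0); case: (f 5 \in M0); case: t.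
Qed.

Lemma alt_disj a b M M1 v : one_at M v -> one_at M1 v ->
  (forall e, (e \in M1) = (e \in M) (+) (e \in hexE a)) ->
  alternating a M -> alternating b M -> alternating b M1 ->
  v \in hexV a -> v \in hexV b -> a = b.
Proof.
move=> O O1 D Aa Ab Ab1 va vb.
case: (one_atP O) => m [mM vm U]; case: (one_atP O1) => m' [mM' vm' U'].
have ma : m \in hexE a by apply: (alt_edge Aa va O mM vm).
have mb : m \in hexE b by apply: (alt_edge Ab vb O mM vm).
have mb' : m' \in hexE b by apply: (alt_edge Ab1 vb O1 mM' vm').
have ma' : m' \in hexE a.
  apply/negPn/negP => na; move: mM'; rewrite D (negbTE na) addbF => /U /(_ vm') E.
  by move: na; rewrite E ma.
have nmm : m != m'.
  by apply/negP => /eqP E; move: mM'; rewrite D -E mM ma.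
exact: share2 nmm ma ma' mb mb'.
Qed.


Lemma hexedge_inj c i j : i < 6 -> j < 6 -> (hexedge c i == hexedge c j) = (i == j).
Proof.
move=> Hi Hj; apply/idP/idP => [/eqP E|/eqP->//].
have h1 : vtx c i \in hexedge c j by rewrite -E hexedgeE in_fset2 eqxx.
have h2 : vtx c (i.+1 %% 6) \in hexedge c j by rewrite -E hexedgeE in_fset2 eqxx orbT.
move: h1 h2; rewrite !hexedgeE !in_fset2 !vtx_inj ?ltn_mod //; clear E.
by case: i Hi => [|[|[|[|[|[|i]]]]]] Hi //; case: j Hj => [|[|[|[|[|[|j]]]]]] Hj.
Qed.



Lemma card_hexE c : #|` hexE c| = 6.
Proof.
have finj := hexedge_inj c.
rewrite /hexE; move: (hexedge c) finj => f finj.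
have -> : [fset f 0; f 1; f 2; f 3; f 4; f 5] = [fset x in [:: f 0; f 1; f 2; f 3; f 4; f 5]].
  by apply/fsetP => x; rewrite in_fset6 !inE orbF.
rewrite card_fseq undup_id //= !inE !finj //.
Qed.



Lemma card_ge2 (T : choiceType) (A : {fset T}) : 1 < #|` A| ->
  exists x y, [/\ x \in A, y \in A & x != y].
Proof.
case: (fset_0Vmem A) => [->|[x xA]]; first by rewrite cardfs0.
rewrite (cardfsD1 x A) xA => h.
case: (fset_0Vmem (A `\ x)) => [E|[y yA]]; first by rewrite E cardfs0 in h.
move: yA; rewrite in_fsetD1 => /andP[yx yA].
by exists y, x; split.
Qed.

Lemma hexE_I1 c d : c != d -> #|` hexE c `&` hexE d| <= 1.
Proof.
move=> cd; rewrite leqNgt; apply/negP => /card_ge2 [x [y [xA yA xy]]].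
move: xA yA; rewrite !in_fsetI => /andP[xc xd] /andP[yc yd].
by move/eqP: cd; apply; apply: share2 xy xc yc xd yd.
Qed.


Lemma four_cycle (M' M1 M2 M3 : {fset edge}) p q a b :
  p != q ->
  (forall e, (e \in M1) = (e \in M') (+) (e \in hexE p)) ->
  (forall e, (e \in M2) = (e \in M') (+) (e \in hexE q)) ->
  (forall e, (e \in M3) = (e \in M1) (+) (e \in hexE a)) ->
  (forall e, (e \in M3) = (e \in M2) (+) (e \in hexE b)) ->
  M3 != M' -> a = q.
Proof.
move=> pq D1 D2 D3 D4 n3; apply/eqP/negPn/negP => aq.
have ap : a != p.
  apply/negP => /eqP E; move/eqP: n3; apply; apply/fsetP => e.
  by rewrite D3 D1 E -addbA addbb addbF.
have bq : b != q.
  apply/negP => /eqP E; move/eqP: n3; apply; apply/fsetP => e.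
  by rewrite D4 D2 E -addbA addbb addbF.
have c6 := card_hexE q.
have c1 := hexE_I1 bq; rewrite eq_sym in pq aq.
have c2 := hexE_I1 pq; have c3 := hexE_I1 aq.
move: (hexE p) (hexE q) (hexE a) (hexE b) D1 D2 D3 D4 c6 c1 c2 c3 => P Q A B D1 D2 D3 D4 c6 c1 c2 c3.
have sub : Q `<=` (Q `&` B) `|` (Q `&` P) `|` (Q `&` A).
  apply/fsubsetP => e eq; rewrite !in_fsetU !in_fsetI eq.
  have := D3 e; rewrite D4 D1 D2 eq.
  by case: (e \in M'); case: (e \in B); case: (e \in P); case: (e \in A).
have := fsubset_leq_card sub.
have U (X Y : {fset edge}) : #|` X `|` Y| <= #|` X| + #|` Y| by rewrite cardfsU leq_subr.
rewrite (fsetIC B) in c1.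
have u1 := U ((Q `&` B) `|` (Q `&` P)) (Q `&` A).
have u2 := U (Q `&` B) (Q `&` P).
rewrite (fsetIC A) in c3. lia.
Qed.


Lemma HV_sub S c v : c \in S -> v \in hexV c -> v \in HV S.
Proof. by move=> cS vc; apply/bigfcupP; exists c; rewrite ?cS. Qed.

Lemma HE_sub S c e : c \in S -> e \in hexE c -> e \in HE S.
Proof. by move=> cS ec; apply/bigfcupP; exists c; rewrite ?cS. Qed.

Lemma HE_P S e : e \in HE S -> exists2 c, c \in S & e \in hexE c.
Proof. by case/bigfcupP => c /andP[cS _] ec; exists c. Qed.

Lemma symP (M1 M2 H : {fset edge}) : (M1 `\` M2) `|` (M2 `\` M1) = H ->
  forall e, (e \in M2) = (e \in M1) (+) (e \in H).
Proof.
move=> E e; rewrite -E in_fsetU !in_fsetD.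
by case: (e \in M1); case: (e \in M2).
Qed.

Lemma symP2 (M1 M2 H : {fset edge}) : (M1 `\` M2) `|` (M2 `\` M1) = H ->
  forall e, (e \in H) = ((e \in M1) != (e \in M2)).
Proof.
move=> E e; rewrite -E in_fsetU !in_fsetD.
by case: (e \in M1); case: (e \in M2).
Qed.


Definition tog n (x : {ffun 'I_n -> bool}) i : {ffun 'I_n -> bool} :=
  [ffun j => if j == i then ~~ x j else x j].

Lemma togE n (x : {ffun 'I_n -> bool}) i j : tog x i j = (x j) (+) (j == i).
Proof. by rewrite ffunE; case: (j == i); case: (x j). Qed.

Lemma tog_adj n (x : {ffun 'I_n -> bool}) i : hq_adj x (tog x i).
Proof.
rewrite /hq_adj; apply/eqP.
rewrite (_ : [set j | x j != tog x i j] = [set i]) ?cards1 //; apply/setP => j.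
by rewrite !inE togE; case: (j == i); case: (x j).
Qed.

Lemma togK n (x : {ffun 'I_n -> bool}) i : tog (tog x i) i = x.
Proof. by apply/ffunP => j; rewrite !togE -addbA addbb addbF. Qed.

Lemma togC n (x : {ffun 'I_n -> bool}) i j : tog (tog x i) j = tog (tog x j) i.
Proof. by apply/ffunP => k; rewrite !togE -!addbA (addbC (k == i)). Qed.

Lemma card_tog n (x : {ffun 'I_n -> bool}) i : x i ->
  #|[set k | tog x i k]|.+1 = #|[set k | x k]|.
Proof.
move=> xi.
have -> : [set k | x k] = i |: [set k | tog x i k].
  apply/setP => k; rewrite !inE togE.
  by case: eqP => [->|_]; rewrite ?xi ?orbF ?addbF.
by rewrite cardsU1 inE togE xi eqxx.
Qed.


Unset Implicit Arguments.
Theorem lemma6 (S : {fset cell}) (n : nat) (W : {fset {fset edge}}) :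
  hexagonal_system S -> kekulean S -> induced_Qn S n W ->
  exists (Hs : {fset cell}) (Es : {fset edge}),
    [/\ clar_cover S Hs Es, #|` Hs| = n &
        forall M, M \in W <-> in_fC S Hs Es M].
Proof.
move=> _ _ [Wpm [phi [inj Wphi adj]]].
have pmW x : perfect_matching S (phi x) by apply: Wpm; apply/Wphi; exists x.
have one x v : v \in HV S -> one_at (phi x) v.
  by move=> vS; case: (pmW x) => _ /(_ v vS).
have oneh x c v : c \in S -> v \in hexV c -> one_at (phi x) v.
  by move=> cS vc; apply: one; apply: HV_sub cS vc.
have radj x i : res_adj S (phi x) (phi (tog x i)) by apply/adj; apply: tog_adj.
pose Z : {ffun 'I_n -> bool} := [ffun => false].
set M0 := phi Z.
have hex_ex : forall i : 'I_n, exists c : cell,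
    c \in S /\ (phi Z `\` phi (tog Z i)) `|` (phi (tog Z i) `\` phi Z) = hexE c.
  by move=> i; case: (radj Z i) => c cS E; exists c; split.
have [h hP] := @fin_all_exists _ (fun _ => cell) _ hex_ex.
have hS i : h i \in S by case: (hP i).
have FD i e : (e \in phi (tog Z i)) = (e \in M0) (+) (e \in hexE (h i)).
  by case: (hP i) => _ /symP.
have F1 i : alternating (h i) M0.
  case: (hP i) => cS /symP2 E; apply: (res_alt (M2 := phi (tog Z i))) => // v vc.
  by split; apply: oneh vc.
have Fneq i j : i != j -> h i != h j.
  move=> ij; apply/negP => /eqP hij.
  have : phi (tog Z i) = phi (tog Z j) by apply/fsetP => e; rewrite !FD hij.
  move/inj/ffunP/(_ i); rewrite !togE !ffunE eqxx /=.
  by move/esym => E; move/negP: ij; apply.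
have F2 i j v : i != j -> v \in hexV (h i) -> v \in hexV (h j) -> False.
  move=> ij vi vj.
  set U := tog (tog Z i) j.
  have UC : U = tog (tog Z j) i by rewrite /U togC.
  case: (radj (tog Z i) j) => a aS /symP Ea.
  case: (radj (tog Z j) i) => b bS; rewrite -UC => /symP Eb.
  have nU : phi U != M0.
    apply/negP => /eqP /inj /ffunP /(_ i); rewrite /U !togE !ffunE eqxx /=.
    by move: ij; case: eqP.
  have aj : a = h j := four_cycle (Fneq i j ij) (FD i) (FD j) Ea Eb nU.
  have Aj : alternating (h j) (phi (tog Z i)).
    apply: (res_alt (M2 := phi U)).
      by move=> u uc; split; apply: oneh (hS j) uc.
    by move=> e; rewrite -aj Ea; case: (e \in phi (tog Z i)); case: (e \in hexE a).
  have := alt_disj (oneh Z (h i) v (hS i) vi) (oneh _ (h i) v (hS i) vi) (FD i) (F1 i) (F1 j) Aj vi vj.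
  by move/eqP; apply/negP; apply: Fneq.
have F2e i j e : i != j -> e \in hexE (h i) -> e \in hexE (h j) -> False.
  move=> ij ei ej; case: (hexE_pair ei) => p [q [_ E _ _]].
  have pe : p \in e by rewrite E in_fset2 eqxx.
  exact: F2 ij (hexE_sub ei pe) (hexE_sub ej pe).
pose X (x : {ffun 'I_n -> bool}) e := [exists i, x i && (e \in hexE (h i))].
have Xin x i e : e \in hexE (h i) -> X x e = x i.
  move=> ei; apply/existsP/idP => [[j /andP[xj ej]]|xi]; last by exists i; rewrite xi ei.
  by case: (eqVneq j i) => [<-//|ji]; case: (F2e _ _ _ ji ej ei).
have Xout x e : (forall i, e \notin hexE (h i)) -> X x e = false.
  by move=> N; apply/existsP => [[i /andP[_ ei]]]; move: (N i); rewrite ei.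
have Xtog x i e : X (tog x i) e = X x e (+) (e \in hexE (h i)).
  case: (boolP (e \in hexE (h i))) => ei.
    by rewrite !(Xin _ i _ ei) togE eqxx.
  rewrite addbF; apply/existsP/existsP => [[j /andP[xj ej]]|[j /andP[xj ej]]];
    exists j; rewrite ej andbT; move: xj; rewrite togE;
    (case: eqP => [ji|_]; [by move: ei; rewrite -ji ej|by rewrite addbF]).
have XZ e : X Z e = false by apply/existsP => [[j]]; rewrite ffunE.
have F3 x e : (e \in phi x) = (e \in M0) (+) X x e.
  move: x e; suff: forall k (x : {ffun 'I_n -> bool}), #|[set k | x k]| <= k -> forall e, (e \in phi x) = (e \in M0) (+) X x e.
    by move=> H x; apply: (H _ x (leqnn _)).
  have isZ (x : {ffun 'I_n -> bool}) : (forall i, x i = false) -> x = Z by move=> H; apply/ffunP => i; rewrite H ffunE.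
  elim => [|k IH] x hc e.
    rewrite (isZ x) ?XZ ?addbF // => i; apply/negP => xi.
    by move: hc; rewrite leqn0 cards_eq0 => /eqP/setP/(_ i); rewrite !inE xi.
  case: (pickP [pred i | x i]) => [i /= xi|none].
    2: by rewrite (isZ x) ?XZ ?addbF //; apply: none.
  set y := tog x i.
  have hy : #|[set k | y k]| <= k by rewrite -ltnS /y card_tog.
  have xy : x = tog y i by rewrite /y togK.
  case: (pickP [pred j | y j]) => [j /= yj|ynone].
    2: by rewrite xy (isZ y ynone) FD Xtog XZ.
  have ji : j != i by apply/negP => /eqP ji; move: yj; rewrite /= togE ji eqxx xi.
  set w := tog y j; set z := tog x j.
  have hw : #|[set k | w k]| <= k by rewrite -ltnS /w card_tog // ltnW.
  have xj : x j by move: yj; rewrite /= togE (negbTE ji) addbF.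
  have hz : #|[set k | z k]| <= k by rewrite -ltnS /z card_tog.
  have D1 e' : (e' \in phi y) = (e' \in phi w) (+) (e' \in hexE (h j)).
    by rewrite (IH y hy) (IH w hw) /w Xtog -!addbA addbb addbF.
  have D2 e' : (e' \in phi z) = (e' \in phi w) (+) (e' \in hexE (h i)).
    by rewrite (IH z hz) (IH w hw) /w /y togC -/z Xtog -!addbA addbb addbF.
  case: (radj y i) => a _; rewrite -xy => /symP Ea.
  case: (radj z j) => b _; rewrite /z togK => /symP Eb.
  have nU : phi x != phi w.
    apply/negP => /eqP /inj /ffunP /(_ i); rewrite /w /y !togE eqxx xi /=.
    by rewrite eq_sym (negbTE ji).
  have ai : a = h i := four_cycle (Fneq j i ji) D1 D2 Ea Eb nU.
  by rewrite Ea (IH y hy) ai xy Xtog -addbA.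
have hinj : injective h.
  move=> i j hij; apply/eqP/negPn/negP => ij; move/eqP: hij; apply/negP; exact: Fneq.
pose Hs := [fset c in map h (enum 'I_n)].
pose Es := [fset e in M0 | [forall i, e \notin hexE (h i)]].
have HsP c : c \in Hs -> exists i, c = h i.
  by rewrite inE => /mapP [i _ ->]; exists i.
have hHs i : h i \in Hs by rewrite inE; apply: map_f; rewrite mem_enum.
have EsP e : e \in Es = (e \in M0) && [forall i, e \notin hexE (h i)] by rewrite in_sep.
exists Hs, Es; split.
- split.
  + by apply/fsubsetP => c /HsP [i ->].
  + apply/fsubsetP => e; rewrite EsP => /andP[eM _].
    by case: (pmW Z) => /fsubsetP sub _; apply: sub.
  + move=> v vS.
    case: (boolP [exists i, v \in hexV (h i)]) => [/existsP [i vi]|nv].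
    * have -> : [fset c in Hs | v \in hexV c] = [fset h i].
        apply/fsetP => c; rewrite in_sep in_fset1; apply/idP/idP => [/andP[/HsP [j ->] vj]|/eqP->].
          by case: (eqVneq j i) => [->//|ji]; case: (F2 _ _ _ ji vj vi).
        by rewrite hHs vi.
      have -> : [fset e in Es | v \in e] = fset0.
        apply/fsetP => e; rewrite in_sep in_fset0 EsP; apply/negP => /andP[/andP[eM /forallP N] ve].
        by move: (N i); rewrite (alt_edge (F1 i) vi (one Z v vS) eM ve).
      by rewrite cardfs1 cardfs0.
    * have N i : v \notin hexV (h i) by apply/negP => vi; move/existsP: nv; apply; exists i.
      have -> : [fset c in Hs | v \in hexV c] = fset0.
        apply/fsetP => c; rewrite in_sep in_fset0; apply/negP => /andP[/HsP [j ->] vj].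
        by move: (N j); rewrite vj.
      case: (one_atP (one Z v vS)) => m [mM vm U].
      have -> : [fset e in Es | v \in e] = [fset m].
        apply/fsetP => e; rewrite in_sep in_fset1 EsP; apply/idP/idP => [/andP[/andP[eM _] ve]|/eqP->].
          by rewrite (U e eM ve).
        rewrite mM vm andbT /=; apply/forallP => i; apply/negP => mi.
        by move: (N i); rewrite (hexE_sub mi vm).
      by rewrite cardfs0 cardfs1.
- rewrite card_fseq undup_id.
    by rewrite (size_map h (enum (ordinal n))) size_enum_ord.
  by rewrite map_inj_uniq //; exact: (enum_uniq (ordinal n)).
- move=> M; split.
  + move=> /Wphi [x <-]; split; first exact: pmW.
    * move=> c /HsP [j ->]; apply: (alt_xor (t := x j) (F1 j)) => k Hk.
      by rewrite F3 (Xin x j) // hexedge_in.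
    * apply/fsubsetP => e; rewrite EsP => /andP[eM /forallP N].
      by rewrite F3 eM (Xout x e N).
  + case=> pmM altM EsM; apply/Wphi.
    exists [ffun i => (hexedge (h i) 0 \in M) != (hexedge (h i) 0 \in M0)].
    apply/fsetP => e; rewrite F3.
    case: (boolP [exists i, e \in hexE (h i)]) => [/existsP [i ei]|ne].
      rewrite (Xin _ i _ ei) ffunE.
      case: (hexE_P ei) => k Hk ->.
      by rewrite (alt_same (altM _ (hHs i)) (F1 i) Hk).
    have N i : e \notin hexE (h i) by apply/negP => ei; move/existsP: ne; apply; exists i.
    rewrite (Xout _ e N) addbF.
    apply/idP/idP => [eM|eM].
      by apply: (fsubsetP EsM); rewrite EsP eM; apply/forallP.
    case: pmM => /fsubsetP MS oneM.
    case: (HE_P (MS e eM)) => c cS ec.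
    case: (hexE_pair ec) => u [q [_ E uc _]].
    have ue : u \in e by rewrite E in_fset2 eqxx.
    have uS : u \in HV S := HV_sub cS uc.
    case: (boolP [exists i, u \in hexV (h i)]) => [/existsP [i ui]|nu].
      by move: (N i); rewrite (alt_edge (altM _ (hHs i)) ui (oneM u uS) eM ue).
    case: (one_atP (one Z u uS)) => m [mM um U].
    have mEs : m \in Es.
      rewrite EsP mM /=; apply/forallP => i; apply/negP => mi.
      by move/existsP: nu; apply; exists i; apply: hexE_sub mi um.
    have mM' := fsubsetP EsM _ mEs.
    case: (one_atP (oneM u uS)) => m' [_ _ U'].
    by rewrite (U' e eM ue) -(U' m mM' um).
Qed.
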